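(* In an operational probabilistic theory with finite-dimensional transformation spaces and convex, closed sets of transformations, if $\chi$ is the unique invariant state of system $\mathrm{A}$, then $\chi$ is internal: for every $\omega\in\mathsf{St}_1(\mathrm{A})$ there exist $p\in(0,1]$ and $\omega_C\in\mathsf{St}_1(\mathrm{A})$ with $\chi=p\,\omega+(1-p)\,\omega_C$.
   Context: $\mathsf{St}_1(\mathrm{A})$ is the set of deterministic (normalized) states of $\mathrm{A}$; $\mathsf{G}_{\mathrm{A}}$ is the group of reversible transformations of $\mathrm{A}$ (a compact group under the standing assumptions). A state $\chi\in\mathsf{St}_1(\mathrm{A})$ is invariant if $\mathcal{U}\chi=\chi$ for all $\mathcal{U}\in\mathsf{G}_{\mathrm{A}}$. *)

(* Defs.v *)
From HB Require Import structures.
From mathcomp Require Import all_boot all_order all_algebra.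
From mathcomp Require Import all_classical all_reals all_analysis.
Set Implicit Arguments. Unset Strict Implicit. Unset Printing Implicit Defensive.
Import Order.TTheory GRing.Theory Num.Theory.
Import numFieldNormedType.Exports.
Local Open Scope classical_set_scope.
Local Open Scope ring_scope.

(* Model of system A: the real vector space of states St_R(A) = 'rV[R]_n
   (finite-dimensional), normalized states St1 : set 'rV_n, transformations
   acting linearly by right multiplication  omega |-> omega *m U. *)

Definition convex_states (R : realType) (n : nat) (S : set 'rV[R]_n) : Prop :=
  forall x y, S x -> S y -> forall t : R, 0 <= t -> t <= 1 ->
    S (t *: x + (1 - t) *: y).

Definition state_space (R : realType) (n : nat) (St1 : set 'rV[R]_n) : Prop :=
  [/\ convex_states St1, closed St1 & bounded_set St1].

Definition reversible_group (R : realType) (n : nat) (St1 : set 'rV[R]_n)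
    (G : set 'M[R]_n) : Prop :=
  [/\ G 1%:M,
      (forall U V, G U -> G V -> G (U *m V)),
      (forall U, G U -> U \in unitmx /\ G (invmx U)),
      (forall U w, G U -> St1 w -> St1 (w *m U))
    & compact G].

Definition invariant_state (R : realType) (n : nat) (St1 : set 'rV[R]_n)
    (G : set 'M[R]_n) (chi : 'rV[R]_n) : Prop :=
  St1 chi /\ forall U, G U -> chi *m U = chi.

Definition internal_state (R : realType) (n : nat) (St1 : set 'rV[R]_n)
    (chi : 'rV[R]_n) : Prop :=
  forall omega, St1 omega ->
    exists p : R, [/\ 0 < p, p <= 1 &
      exists omegaC, St1 omegaC /\ chi = p *: omega + (1 - p) *: omegaC].

(* Main.v *)
Require Import Defs.
From HB Require Import structures.
From mathcomp Require Import all_boot all_order all_algebra.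
From mathcomp Require Import all_classical all_reals all_analysis.
From mathcomp Require Import ring lra.
Import Order.TTheory GRing.Theory Num.Theory.
Import numFieldNormedType.Exports.
Local Open Scope classical_set_scope.
Local Open Scope ring_scope.

Set Implicit Arguments. Unset Strict Implicit. Unset Printing Implicit Defensive.
Section S.
Variable R : realType.

Lemma cont_fst (T U : topologicalType) : continuous (@fst T U).
Proof. move=> [x y]; exact: cvg_fst. Qed.
Lemma cont_snd (T U : topologicalType) : continuous (@snd T U).
Proof. move=> [x y]; exact: cvg_snd. Qed.

Lemma cont_entry m n i j : continuous (fun M : 'M[R]_(m, n) => M i j).
Proof.
move=> M; apply/(@cvg_ballP _ _ _ (nbhs M) (nbhs_filter M)) => e e0.
have hb : \forall N \near M, ball M e N by apply/nbhs_ballP; exists e.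
by apply: filterS hb => N [_ /(_ i j)].
Qed.

Lemma cont_mx (T : topologicalType) m n (f : T -> 'M[R]_(m, n)) :
  (forall i j, continuous (fun t => f t i j)) -> continuous f.
Proof.
move=> fc x; apply/(@cvg_ballP _ _ _ (nbhs x) (nbhs_filter x)) => e e0.
have H : forall ij : 'I_m * 'I_n, \forall t \near x, ball (f x ij.1 ij.2) e (f t ij.1 ij.2).
  by move=> ij; apply: (cvg_ball (fc ij.1 ij.2 x)).
have := @filter_forall _ _ _ (nbhs x) (nbhs_filter x) H.
apply: filterS => t Ht; split => // i j; exact: (Ht (i, j)).
Qed.

Lemma cont_sum (T : topologicalType) k (F : 'I_k -> T -> R) :
  (forall i, continuous (F i)) -> continuous (fun t => \sum_(i < k) F i t).
Proof.
elim: k F => [|k IH] F Fc.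
  move=> x; under eq_fun do rewrite big_ord0; exact: cvg_cst.
move=> x; under eq_fun do rewrite big_ord_recr /=.
apply: cvgD; first exact: (IH (fun i => F (widen_ord (leqnSn k) i))).
exact: Fc.
Qed.

Lemma cont_entryf (T : topologicalType) m n (f : T -> 'M[R]_(m, n)) i j :
  continuous f -> continuous (fun t => f t i j).
Proof. move=> fc x; apply: (@continuous_comp _ _ _ f (fun M : 'M[R]_(m, n) => M i j)); [exact: fc | exact: cont_entry]. Qed.

Lemma cont_mulmx (T : topologicalType) m n p (f : T -> 'M[R]_(m, n)) (g : T -> 'M[R]_(n, p)) :
  continuous f -> continuous g -> continuous (fun t => f t *m g t).
Proof.
move=> fc gc; apply: cont_mx => i j.
under eq_fun do rewrite mxE.
apply: cont_sum => k x; apply: cvgM.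
  exact: (@cont_entryf _ _ _ _ i k fc x).
exact: (@cont_entryf _ _ _ _ k j gc x).
Qed.

End S.

Section Main.
Variables (R : realType) (n : nat) (St1 : set 'rV[R]_n) (G : set 'M[R]_n) (w : 'rV[R]_n).
Hypotheses (cvx : convex_states St1) (G1 : G 1%:M)
  (GM : forall U V, G U -> G V -> G (U *m V))
  (GI : forall U, G U -> U \in unitmx /\ G (invmx U))
  (GS : forall U x, G U -> St1 x -> St1 (x *m U))
  (Gc : compact G) (Sw : St1 w).

Definition step (p : 'rV[R]_n * (R * 'M[R]_n)) : 'rV[R]_n :=
  p.2.1 *: p.1 + (1 - p.2.1) *: (w *m p.2.2).

Fixpoint Sk (k : nat) : set 'rV[R]_n :=
  match k with
  | 0 => (fun U => w *m U) @` G
  | k.+1 => step @` (Sk k `*` (`[0, 1] `*` G))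
  end.

Lemma cont_cmp (A B C : topologicalType) (f : A -> B) (g : B -> C) :
  continuous f -> continuous g -> continuous (fun x => g (f x)).
Proof. move=> fc gc x; apply: (@continuous_comp _ _ _ f g); [exact: fc|exact: gc]. Qed.

Lemma step_cont : continuous step.
Proof.
have c21 : continuous (fun p : 'rV[R]_n * (R * 'M[R]_n) => p.2.1).
  exact: (cont_cmp (@cont_snd _ _) (@cont_fst _ _)).
have c22 : continuous (fun p : 'rV[R]_n * (R * 'M[R]_n) => p.2.2).
  exact: (cont_cmp (@cont_snd _ _) (@cont_snd _ _)).
have h : continuous (fun p : 'rV[R]_n * (R * 'M[R]_n) => w *m p.2.2).
  by apply: cont_mulmx => // ?; exact: cvg_cst.
move=> p; apply: cvgD.
  apply: cvgZ; first exact: c21.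
  exact: cont_fst.
apply: cvgZ; last exact: h.
apply: cvgB; first exact: cvg_cst.
exact: c21.
Qed.

Lemma Sk_compact k : compact (Sk k).
Proof.
elim: k => [|k IH] /=.
  apply: continuous_compact => //; apply: continuous_subspaceT.
  apply: (@cont_mulmx _ _ _ _ _ (fun _ => w) (fun U => U)).
    exact: cst_continuous.
  by move=> ?; exact: cvg_id.
apply: continuous_compact; first exact: continuous_subspaceT step_cont.
apply: compact_setX => //; apply: compact_setX => //; exact: segment_compact.
Qed.

Lemma itv01 (t : R) : t \in `[0, 1]%R -> 0 <= t /\ t <= 1.
Proof. by rewrite /= in_itv /= => /andP. Qed.

Lemma itv01' (a t : R) : t \in `[0, a]%R -> 0 <= t /\ t <= a.
Proof. by rewrite /= in_itv /= => /andP. Qed.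

Lemma Sk_St1 k : Sk k `<=` St1.
Proof.
elim: k => [|k IH] x /=.
  by case=> U GU <-; exact: GS.
case=> [[y [t U]]] [/= Sy [/itv01 [t0 t1] GU]] <-.
rewrite /step /=; apply: cvx => //; [exact: IH | exact: GS].
Qed.

Lemma Sk_inv k x U : Sk k x -> G U -> Sk k (x *m U).
Proof.
elim: k x => [|k IH] x /=.
  by case=> V GV <- GU; exists (V *m U); [exact: GM | rewrite mulmxA].
case=> [[y [t V]]] [/= Sy [t01 GV]] <- GU.
exists (y *m U, (t, V *m U)); first by split => //=; [exact: IH | split => //; exact: GM].
by rewrite /step /= mulmxDl -!scalemxAl mulmxA.
Qed.

Lemma Sk_mono k x : Sk k x -> Sk k.+1 x.
Proof.
move=> Sx; exists (x, (1, 1%:M)); first by split => //=; split => //; rewrite /= in_itv /= ler01 lexx.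
by rewrite /step /= subrr scale0r addr0 scale1r.
Qed.

Lemma Sk_decomp k x : Sk k x ->
  exists p V s, [/\ 0 < p, p <= 1, G V, St1 s & x = p *: (w *m V) + (1 - p) *: s].
Proof.
elim: k x => [|k IH] x /=.
  case=> U GU <-; exists 1, U, w; split => //.
  by rewrite subrr scale0r addr0 scale1r.
case=> [[y [t V]]] [/= Sy [/itv01 [t0 t1] GV]] <-.
have [t1'|->] : t < 1 \/ t = 1.
    by move: t1; rewrite le_eqVlt => /orP [/eqP ->|->]; [right|left].
  exists (1 - t), V, y; split => //; first by rewrite subr_gt0.
  - by rewrite lerBlDr lerDl.
  - exact: (Sk_St1 Sy).
  have -> : 1 - (1 - t) = t by ring.
  by rewrite /step /= addrC.
rewrite /step /= subrr scale0r addr0 scale1r; exact: IH.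
Qed.

Lemma Sk_concat a b x y t : Sk a x -> Sk b y -> 0 <= t -> t <= 1 ->
  Sk (a + b).+1 (t *: x + (1 - t) *: y).
Proof.
move=> Sx; elim: b y t => [|b IH] y t /=.
  case=> U GU <- t0 t1; rewrite addn0.
  exists (x, (t, U)) => //; split => //; split => //=; rewrite in_itv /=; apply/andP; split => //.
case=> [[y' [s U]]] [/= Sy' [/itv01 [s0 s1] GU]] <- t0 t1.
rewrite addnS.
set r := t + (1 - t) * s.
have r0 : 0 <= r by rewrite /r addr_ge0 // mulr_ge0 // subr_ge0.
have r1 : r <= 1.
  rewrite /r; have : (1 - t) * s <= 1 - t by rewrite ler_piMr // subr_ge0.
  lra.
have [/eqP rz|rnz] := boolP (r == 0).
  have tz : t = 0 by move: rz; rewrite /r; nra.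
  have sz : s = 0 by move: rz; rewrite /r tz subr0 mul1r add0r.
  have Sz := IH y' 0 Sy' (lexx 0) ler01.
  exists (0 *: x + (1 - 0) *: y', (0, U)); first by split => //; split => //=; rewrite in_itv /= lexx ler01.
  rewrite /step /=; apply/matrixP => i j; rewrite !mxE tz sz; ring.
have tr0 : 0 <= t / r by rewrite divr_ge0.
have tr1 : t / r <= 1.
  rewrite ler_pdivrMr ?mul1r; last by rewrite lt_neqAle eq_sym rnz r0.
  rewrite /r lerDl mulr_ge0 // subr_ge0 //.
have Sz := IH y' (t / r) Sy' tr0 tr1.
exists ((t / r) *: x + (1 - t / r) *: y', (r, U)); first by split => //; split => //=; rewrite in_itv /= r0 r1.
rewrite /step /=; apply/matrixP => i j; rewrite !mxE /r.
field; move: rnz; rewrite /r //.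
Qed.

Lemma Sk_convex k x y t : Sk k x -> Sk k y -> 0 <= t -> t <= 1 ->
  Sk (k + k).+1 (t *: x + (1 - t) *: y).
Proof. exact: Sk_concat. Qed.

Definition rep k x := exists (l : 'I_k.+1 -> R) (W : 'I_k.+1 -> 'M[R]_n),
  [/\ forall i, 0 <= l i, \sum_i l i = 1, forall i, G (W i) &
      x = \sum_i l i *: (w *m W i)].

Lemma Sk_nonempty k : exists y, Sk k y.
Proof.
elim: k => [|k [y Sy]]; first by exists (w *m 1%:M); exists 1%:M.
by exists y; apply: Sk_mono.
Qed.

Lemma Sk_rep k x : Sk k x -> rep k x.
Proof.
elim: k x => [|k IH] x /=.
  case=> U GU <-; exists (fun _ => 1), (fun _ => U); split => //.
    by rewrite big_ord1.
  by rewrite big_ord1 scale1r.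
case=> [[y [t U]]] [/= Sy [/itv01 [t0 t1] GU]] <-.
have [l [W [l0 l1 GW ->]]] := IH y Sy.
exists (fun i : 'I_k.+2 => if (i < k.+1)%N then t * l (inord i) else 1 - t).
exists (fun i : 'I_k.+2 => if (i < k.+1)%N then W (inord i) else U).
split.
- move=> i; case: ifP => _; [by rewrite mulr_ge0 | by rewrite subr_ge0].
- rewrite big_ord_recr /= ltnn.
  under eq_bigr => i _ do rewrite /= ltn_ord inord_val.
  by rewrite -mulr_sumr l1 mulr1 addrC subrK.
- by move=> i; case: ifP.
rewrite /step /= [RHS]big_ord_recr /= ltnn; congr (_ + _).
under [RHS]eq_bigr => i _ do rewrite /= ltn_ord inord_val.
rewrite scaler_sumr; apply: eq_bigr => i _; by rewrite scalerA.
Qed.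

Lemma rep_Sk k x : rep k x -> Sk k x.
Proof.
elim: k x => [|k IH] x [l [W [l0 l1 GW ->]]] /=.
  move: l1; rewrite !big_ord1 => ->; rewrite scale1r; by exists (W ord0).
rewrite big_ord_recr /=; move: l1; rewrite big_ord_recr /=.
set t := \sum_(i < k.+1) l (widen_ord (leqnSn k.+1) i) => l1.
have t0 : 0 <= t by rewrite sumr_ge0.
have lm : l ord_max = 1 - t by rewrite -l1 addrAC subrr add0r.
have [/eqP tz|tnz] := boolP (t == 0).
  have lz : forall i, l (widen_ord (leqnSn k.+1) i) = 0.
    by move=> i; apply: (psumr_eq0P _ tz).
  have [y Sy] := Sk_nonempty k.
  exists (y, (0, W ord_max)); first by split => //; split => //=; rewrite in_itv /= lexx ler01.
  rewrite /step /= scale0r add0r subr0 scale1r big1 ?add0r.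
    by rewrite lm tz subr0 scale1r.
  by move=> i _; rewrite lz scale0r.
have tp : 0 < t by rewrite lt_neqAle eq_sym tnz t0.
pose y := \sum_(i < k.+1) (l (widen_ord (leqnSn k.+1) i) / t) *: (w *m W (widen_ord (leqnSn k.+1) i)).
have Sy : Sk k y.
  apply: IH; exists (fun i => l (widen_ord (leqnSn k.+1) i) / t).
  exists (fun i => W (widen_ord (leqnSn k.+1) i)); split => //.
    by move=> i; rewrite divr_ge0.
  by rewrite -mulr_suml -/t divff.
exists (y, (t, W ord_max)).
  split => //; split => //=; rewrite in_itv /= t0 /=; move: (l0 ord_max); rewrite lm; lra.
rewrite /step /= -lm; congr (_ + _).
rewrite scaler_sumr; apply: eq_bigr => i _; rewrite scalerA mulrCA divff ?mulr1 //.
Qed.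

Lemma rep_reduce k x : (n <= k)%N -> rep k.+1 x -> rep k x.
Proof.
move=> nk [l [W [l0 l1 GW ->]]].
pose y i := w *m W i.
pose Y : 'M[R]_(k.+2, n) := \matrix_(i < k.+2) y i.
pose A : 'M[R]_(k.+2, n + 1) := row_mx Y (const_mx 1).
have rk : (0 < \rank (kermx A))%N.
  rewrite mxrank_ker subn_gt0; apply: (leq_ltn_trans (rank_leq_col A)).
  by rewrite addn1 ltnS ltnS.
have [i1 vnz] : exists i, row i (kermx A) != 0.
  case: (pselect (exists i, row i (kermx A) != 0)) => // H; exfalso.
  have kz : kermx A = 0.
    apply/row_matrixP => i; rewrite row0; apply/eqP; apply/negPn/negP => h.
    by apply: H; exists i.
  by move: rk; rewrite kz mxrank0.
set v := row i1 (kermx A) in vnz.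
have vA : v *m A = 0 by rewrite /v -row_mul mulmx_ker row0.
move: vA; rewrite mul_mx_row -(row_mx0 _ 1 n 1) => /eq_row_mx [vY v1].
have sv : \sum_i v 0 i = 0.
  have := congr1 (fun M : 'M[R]_(1, 1) => M 0 0) v1; rewrite !mxE.
  move=> h; apply: (etrans _ h); apply: eq_bigr => i _.
  by rewrite !mxE mulr1.
have svy : \sum_i v 0 i *: y i = 0.
  apply: (etrans _ vY); rewrite [RHS]mulmx_sum_row; apply: eq_bigr => j _; by rewrite rowK.
have [i2 vpos] : exists i, 0 < v 0 i.
  case: (pselect (exists i, 0 < v 0 i)) => // H.
  have vle : forall i, v 0 i <= 0.
    by move=> i; rewrite leNgt; apply/negP => h; apply: H; exists i.
  have vz : forall i, v 0 i = 0.
    move=> i; apply/eqP; rewrite -oppr_eq0; apply/eqP.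
    apply: (@psumr_eq0P _ _ xpredT (fun i => - v 0 i)) => //.
      by move=> j _; rewrite oppr_ge0.
    by rewrite sumrN sv oppr0.
  exfalso; move/negP: vnz; apply; apply/eqP/rowP => j; by rewrite vz mxE.
case: (@arg_minP _ R _ i2 (fun i => 0 < v 0 i) (fun i => l i / v 0 i) vpos) => i0 vi0 imin.
set th := l i0 / v 0 i0.
have th0 : 0 <= th by rewrite divr_ge0 // ltW.
pose mu i := l i - th * v 0 i.
have mu0 : forall i, 0 <= mu i.
  move=> i; rewrite /mu subr_ge0; case: (ltrP 0 (v 0 i)) => hv.
    by have := imin i hv; rewrite -/th ler_pdivlMr.
  have : th * v 0 i <= 0 by rewrite mulr_ge0_le0.
  move=> h; apply: (le_trans h); exact: l0.
have mui0 : mu i0 = 0 by rewrite /mu /th divfK ?subrr // gt_eqF.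
have smu : \sum_i mu i = 1 by rewrite /mu sumrB l1 -mulr_sumr sv mulr0 subr0.
have xmu : \sum_i l i *: y i = \sum_i mu i *: y i.
  rewrite /mu; under [RHS]eq_bigr => i _ do rewrite scalerBl.
  rewrite sumrB; under [X in _ = _ - X]eq_bigr => i _ do rewrite -scalerA.
  by rewrite -scaler_sumr svy scaler0 subr0.
exists (fun j => mu (lift i0 j)), (fun j => W (lift i0 j)); split.
- by move=> j.
- by move: smu; rewrite (bigD1_ord i0) //= mui0 add0r.
- by move=> j.
by rewrite xmu (bigD1_ord i0) //= mui0 scale0r add0r.
Qed.

Lemma Sk_down k : (n <= k)%N -> Sk k.+1 `<=` Sk k.
Proof. by move=> nk x /Sk_rep /(rep_reduce nk) /rep_Sk. Qed.

Lemma Sk_monoN a b : (a <= b)%N -> Sk a `<=` Sk b.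
Proof.
elim: b => [|b IH]; first by rewrite leqn0 => /eqP ->.
rewrite leq_eqVlt => /orP [/eqP -> //|]; rewrite ltnS => /IH h x /h; exact: Sk_mono.
Qed.

Lemma Sk_le_n k : Sk k `<=` Sk n.
Proof.
case: (leqP k n) => [|nk]; first exact: Sk_monoN.
have : forall d, Sk (n + d) `<=` Sk n.
  elim => [|d IH]; first by rewrite addn0.
  by move=> x; rewrite addnS => /(Sk_down (leq_addr d n)) /IH.
move=> /(_ (k - n)%N); rewrite subnKC //; exact: ltnW.
Qed.

Definition q (x : 'rV[R]_n) : R := \sum_j x 0 j * x 0 j.

Lemma q_ge0 x : 0 <= q x.
Proof. by apply: sumr_ge0 => j _; rewrite -expr2 sqr_ge0. Qed.

Lemma q_eq0 x : q x = 0 -> x = 0.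
Proof.
move=> h; apply/rowP => j; rewrite mxE.
have : x 0 j * x 0 j = 0.
  by apply: (psumr_eq0P _ h) => // i _; rewrite -expr2 sqr_ge0.
by move/eqP; rewrite mulf_eq0 orbb => /eqP.
Qed.

Lemma q_mix t a b : q (t *: a + (1 - t) *: b) =
  t * q a + (1 - t) * q b - t * (1 - t) * q (a - b).
Proof.
rewrite /q !mulr_sumr -big_split -sumrB; apply: eq_bigr => j _ /=; rewrite !mxE; ring.
Qed.

Lemma cont_mulR (T : topologicalType) (f g : T -> R) :
  continuous f -> continuous g -> continuous (fun t => f t * g t).
Proof. by move=> fc gc x; apply: cvgM; [exact: fc|exact: gc]. Qed.

Lemma cont_q : continuous q.
Proof.
apply: (@cont_sum R _ n (fun j (x : 'rV[R]_n) => x 0 j * x 0 j)) => j.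
by apply: cont_mulR; exact: cont_entry.
Qed.

Lemma cont_qU (U : 'M[R]_n) : continuous (fun x : 'rV[R]_n => q (x *m U)).
Proof.
apply: (@cont_cmp _ _ _ (fun x : 'rV[R]_n => x *m U) q _ cont_q).
apply: (@cont_mulmx _ _ _ _ _ (fun x => x) (fun _ => U)); last exact: cst_continuous.
by move=> ?; exact: cvg_id.
Qed.

Lemma cont_zU (z : 'rV[R]_n) : continuous (fun U : 'M[R]_n => q (z *m U)).
Proof.
apply: (@cont_cmp _ _ _ (fun U : 'M[R]_n => z *m U) q _ cont_q).
apply: (@cont_mulmx _ _ _ _ _ (fun _ => z) (fun U => U)); first exact: cst_continuous.
by move=> ?; exact: cvg_id.
Qed.

Lemma G0 : G !=set0.
Proof. by exists 1%:M. Qed.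

Lemma fixed_point : exists xs, Sk n xs /\ forall V, G V -> xs *m V = xs.
Proof.
have Kc : compact (Sk n) by exact: Sk_compact.
have [x0 Kx0] := @Sk_nonempty n.
have [c0 /set_mem Gc0 c0max] := compact_EVT_max G0 Gc (continuous_subspaceT (@cont_zU x0)).
set s0 := q (x0 *m c0).
have pc : forall U : 'M[R]_n, continuous (fun p : 'rV[R]_n * R => p.2 - q (p.1 *m U)).
  move=> U p; apply: cvgB; first exact: cont_snd.
  exact: (@cont_cmp _ _ _ fst _ (@cont_fst _ _) (@cont_qU U)).
pose P := (Sk n `*` `[0, s0]) `&`
  \bigcap_(U in G) ((fun p : 'rV[R]_n * R => p.2 - q (p.1 *m U)) @^-1` [set r | 0 <= r]).
have Pc : compact P.
  apply: compact_closedI; first by apply: compact_setX => //; exact: segment_compact.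
  apply: closed_bigI => U _; apply: preimage_closed; last exact: closed_ge.
  by move=> p _; exact: pc.
have P0 : P !=set0.
  exists (x0, s0); split; first by split => //=; rewrite in_itv /= lexx q_ge0.
  by move=> U GU /=; rewrite subr_ge0; apply: c0max; exact: mem_set.
have [[xs ss] /set_mem [[Kx /itv01' sI] Hall] minP] :=
  compact_EVT_min P0 Pc (continuous_subspaceT (@cont_snd _ _)).
exists xs; split => // V GV.
have qU : forall U, G U -> q (xs *m U) <= ss.
  by move=> U GU; have := Hall U GU; rewrite /= subr_ge0.
apply/eqP; apply/negPn/negP => neq.
set z := xs - xs *m V.
have znz : z != 0 by rewrite /z subr_eq0 eq_sym.
have [u1 /set_mem Gu1 u1min] := compact_EVT_min G0 Gc (continuous_subspaceT (@cont_zU z)).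
set d := q (z *m u1).
have dp : 0 < d.
  rewrite lt_neqAle q_ge0 andbT eq_sym; apply/negP => /eqP /q_eq0 h.
  move/negP: znz; apply; apply/eqP.
  by rewrite -(mulmxK (GI Gu1).1 z) h mul0mx.
have dU : forall U, G U -> d <= q (z *m U) by move=> U GU; apply: u1min; exact: mem_set.
pose m := 2^-1 *: xs + (1 - 2^-1) *: (xs *m V).
have Km : Sk n m.
  apply: Sk_le_n; apply: (Sk_convex Kx (Sk_inv Kx GV)).
    by rewrite invr_ge0 ler0n.
  by rewrite invf_le1 // ?ler1n // ltr0n.
have qm : forall U, G U -> q (m *m U) <= ss - d / 4.
  move=> U GU.
  have -> : m *m U = 2^-1 *: (xs *m U) + (1 - 2^-1) *: (xs *m V *m U).
    by rewrite /m mulmxDl -!scalemxAl.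
  rewrite q_mix.
  have -> : xs *m U - xs *m V *m U = z *m U by rewrite /z mulmxBl.
  have h1 := qU U GU.
  have h2 : q (xs *m V *m U) <= ss by rewrite -mulmxA; apply: qU; exact: GM.
  have h3 := dU U GU.
  have -> : (1 - 2^-1 : R) = 2^-1 by field.
  have -> : (2^-1 * 2^-1 : R) = 4^-1 by field.
  have -> : d / 4 = 4^-1 * d by rewrite mulrC.
  have e2 : (0 : R) < 2^-1 by rewrite invr_gt0 ltr0n.
  have e4 : (0 : R) < 4^-1 by rewrite invr_gt0 ltr0n.
  have -> : ss = 2^-1 * ss + 2^-1 * ss by field.
  nra.
have qm0 := qm _ G1; have := q_ge0 (m *m 1%:M) => h0.
have : (m, ss - d / 4) \in P.
  apply: mem_set; split.
    split => //=; rewrite in_itv /=; apply/andP; split; first exact: le_trans qm0.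
    case: sI => _ hs; apply: le_trans hs; rewrite lerBlDr lerDl divr_ge0 // ltW //.
  by move=> U GU /=; rewrite subr_ge0; exact: qm.
move=> /minP /= h.
have : 0 < d / 4 by rewrite divr_gt0.
lra.
Qed.

Lemma internal_w (chi : 'rV[R]_n) :
  (forall psi, invariant_state St1 G psi -> psi = chi) ->
  exists p : R, [/\ 0 < p, p <= 1 &
      exists omegaC, St1 omegaC /\ chi = p *: w + (1 - p) *: omegaC].
Proof.
move=> uniq.
have [xs [Kx xinv]] := fixed_point.
have xc : xs = chi by apply: uniq; split => //; exact: (Sk_St1 Kx).
have [p [V [s [p0 p1 GV Ss xe]]]] := Sk_decomp Kx.
have [uV GiV] := GI GV.
exists p; split => //; exists (s *m invmx V); split; first exact: GS.
rewrite -xc; transitivity (xs *m invmx V); first by rewrite xinv.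
by rewrite xe mulmxDl -!scalemxAl mulmxK.
Qed.

End Main.


Unset Implicit Arguments.

Theorem mainTheorem11 (R : realType) (n : nat) (St1 : set 'rV[R]_n)
    (G : set 'M[R]_n) (chi : 'rV[R]_n) :
  state_space St1 ->
  reversible_group St1 G ->
  invariant_state St1 G chi ->
  (forall psi, invariant_state St1 G psi -> psi = chi) ->
  internal_state St1 chi.
Proof.
move=> [cvx _ _] [G1 GM GI GS Gc] [Schi chiI] uniq omega Som.
exact: (internal_w cvx G1 GM GI GS Gc Som uniq).
Qed.
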